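(* Let $f\colon\boldsymbol{A}\to\boldsymbol{B}$ be a homomorphism between semilattices, $F$ a filter of $\boldsymbol{B}$, and $G\in\boldsymbol{A}_\ast$. If $f^{-1}[F]\subseteq G$ and the filter of $\boldsymbol{B}$ generated by $F\cup f[G]$ is disjoint from $f[A\smallsetminus G]$, then there exists $H\in\boldsymbol{B}_\ast$ such that $F\subseteq H$ and $G=f^{-1}[H]$.
   Context: A semilattice $\langle A;\land\rangle$ is ordered by $a\le b$ iff $a\land b=a$. A filter is a nonempty upset closed under binary meets. A filter is meet irreducible if it is proper and not the intersection of two filters both different from it. For a semilattice $\boldsymbol{A}$, $\boldsymbol{A}_\ast$ denotes the set (poset under inclusion) of meet irreducible filters of $\boldsymbol{A}$. *)

(* Defs.v *)
From HB Require Import structures.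
From mathcomp Require Import all_boot all_order.
Import Order.Theory.
Local Open Scope order_scope.

Section SemilatticeFilters.
Context {d : Order.disp_t} {A : meetSemilatticeType d}.

Definition is_filter (F : A -> Prop) : Prop :=
  (exists x, F x) /\
  (forall x y, F x -> x <= y -> F y) /\
  (forall x y, F x -> F y -> F (x `&` y)).

Definition proper_set (F : A -> Prop) : Prop := exists x, ~ F x.

Definition meet_irreducible (F : A -> Prop) : Prop :=
  is_filter F /\ proper_set F /\
  forall G1 G2 : A -> Prop, is_filter G1 -> is_filter G2 ->
    (forall x, F x <-> (G1 x /\ G2 x)) ->
    (forall x, G1 x <-> F x) \/ (forall x, G2 x <-> F x).

Definition gen_filter (S : A -> Prop) : A -> Prop :=
  fun x => forall G, is_filter G -> (forall y, S y -> G y) -> G x.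

End SemilatticeFilters.

Definition img_set {T U : Type} (f : T -> U) (S : T -> Prop) : U -> Prop :=
  fun u => exists t, S t /\ f t = u.

Definition is_semilattice_hom {dA dB : Order.disp_t}
  {A : meetSemilatticeType dA} {B : meetSemilatticeType dB} (f : A -> B) : Prop :=
  forall x y, f (x `&` y) = f x `&` f y.

(* Main.v *)
Require Import Defs.
From HB Require Import structures.
From mathcomp Require Import all_boot all_order.
From mathcomp Require Import boolp classical_sets.
Import Order.Theory.
Local Open Scope order_scope.

Lemma zorn_sets T (P : (T -> Prop) -> Prop) :
  (forall C : (T -> Prop) -> Prop, (forall X, C X -> P X) ->
     (forall X Y, C X -> C Y -> (forall t, X t -> Y t) \/ (forall t, Y t -> X t)) ->
     P (fun t => exists X, C X /\ X t)) ->
  exists A, P A /\ forall B, (forall t, A t -> B t) -> P B -> forall t, B t -> A t.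
Proof.
move=> H.
have hyp : forall F : set (set T), (F `<=` P)%classic -> total_on F subset ->
      P (\bigcup_(X in F) X)%classic.
  move=> F FP Ftot.
  have -> : (\bigcup_(X in F) X)%classic = (fun t => exists X, F X /\ X t).
    by apply/funext => t; apply/propext; split => [[X FX Xt]|[X [FX Xt]]]; exists X.
  apply: H; first by []. move=> X Y FX FY; case: (Ftot X Y FX FY) => h; [left|right]; exact: h.
have [A [PA Amax]] := Zorn_bigcup hyp.
exists A; split => // B AB PB t Bt.
apply: contrapT => nAt.
apply: (Amax B) => //; split; first by move=> x; apply: AB.
by move=> BA; apply: nAt; apply: BA.
Qed.

Definition good (dA dB : Order.disp_t)
  (A : meetSemilatticeType dA) (B : meetSemilatticeType dB) (f : A -> B)
  (F : B -> Prop) (G : A -> Prop) (X : B -> Prop) := [/\ forall b, F b -> X b, forall a, G a -> X (f a),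
  forall x y, X x -> x <= y -> X y, forall x y, X x -> X y -> X (x `&` y)
  & forall a, ~ G a -> ~ X (f a)].
Arguments good {dA dB A B}.

Theorem lemma3p6 (dA dB : Order.disp_t)
  (A : meetSemilatticeType dA) (B : meetSemilatticeType dB) (f : A -> B)
  (F : B -> Prop) (G : A -> Prop) :
  is_semilattice_hom f ->
  is_filter F ->
  meet_irreducible G ->
  (forall a, F (f a) -> G a) ->
  (forall b, gen_filter (fun y => F y \/ img_set f G y) b ->
     ~ img_set f (fun a => ~ G a) b) ->
  exists H : B -> Prop,
    meet_irreducible H /\ (forall b, F b -> H b) /\ (forall a, G a <-> H (f a)).
Proof.
move=> hom [[x0 Fx0] [Fup Fmc]] [[[g0 Gg0] [Gup Gmc]] [[na nGna] Girr]] FG Kdis.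
have mono : forall a a', a <= a' -> f a <= f a'.
  by move=> a a' /meet_idPl e; apply/meet_idPl; rewrite -hom e.
pose P (X : B -> Prop) := (forall t, ~ X t) \/ good f F G X.
have [H [PH Hmax]] : exists H, P H /\ forall B, (forall t, H t -> B t) -> P B -> forall t, B t -> H t.
  apply: zorn_sets => C CP Ctot.
  case: (pselect (exists X, C X /\ exists t, X t)) => [[X [CX [t Xt]]]|nex]; last first.
    rewrite /P /=; left => t [X [CX Xt]]; apply: nex; exists X; split => //; by exists t.
  have gX : good f F G X by case: (CP X CX) => // /(_ t).
  have gY : forall Y, C Y -> forall y, Y y -> good f F G Y.
    by move=> Y CY y Yy; case: (CP Y CY) => // /(_ y).
  case: (gX : and5 _ _ _ _ _) => g1 g2 _ _ _.
  rewrite /P /=; right; rewrite /good; split.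
  - by move=> b Fb; exists X; split => //; apply: g1.
  - by move=> a Ga; exists X; split => //; apply: g2.
  - move=> x y [Y [CY Yx]] xy; exists Y; split => //.
    by case: (gY Y CY x Yx : and5 _ _ _ _ _) => _ _ up _ _; apply: up xy.
  - move=> x y [Y1 [CY1 Yx]] [Y2 [CY2 Yy]].
    case: (Ctot Y1 Y2 CY1 CY2) => sub.
      exists Y2; split => //; case: (gY Y2 CY2 y Yy : and5 _ _ _ _ _) => _ _ _ mc _; apply: mc => //.
      exact: sub.
    exists Y1; split => //; case: (gY Y1 CY1 x Yx : and5 _ _ _ _ _) => _ _ _ mc _; apply: mc => //.
    exact: sub.
  - move=> a nGa [Y [CY Yfa]].
    by case: (gY Y CY _ Yfa : and5 _ _ _ _ _) => _ _ _ _ /(_ a nGa); apply.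
pose K := gen_filter (fun y => F y \/ img_set f G y).
have gK : good f F G K.
  rewrite /good; split.
  - by move=> b Fb X _ hS; apply: hS; left.
  - by move=> a Ga X _ hS; apply: hS; right; exists a.
  - by move=> x y Kx xy X fX hS; case: (fX) => _ [up _]; apply: up (Kx X fX hS) xy.
  - by move=> x y Kx Ky X fX hS; case: (fX) => _ [_ mc]; apply: mc; [apply: Kx|apply: Ky].
  - by move=> a nGa Kfa; apply: (Kdis _ Kfa); exists a.
have gH : good f F G H.
  case: PH => [e|//]; exfalso.
  have : P K by right.
  move/(Hmax K (fun t Ht => False_ind _ (e t Ht)))/(_ x0) => HK.
  apply: (e x0); apply: HK; by case: (gK : and5 _ _ _ _ _) => + _ _ _ _; apply.
case: (gH : and5 _ _ _ _ _) => h1 h2 hup hmc hdis.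
have GH : forall a, G a <-> H (f a).
  split; first exact: h2.
  by move=> Hfa; apply: contrapT => nGa; apply: (hdis a nGa).
exists H; split; last by split.
split; first by split; [exists x0; apply: h1|split].
split; first by exists (f na); apply: hdis.
move=> H1 H2 fH1 fH2 e.
have pre : forall Hi : B -> Prop, is_filter Hi -> (forall t, H t -> Hi t) ->
    is_filter (fun a => Hi (f a)).
  move=> Hi [_ [up mc]] sub; split; first by exists g0; apply: sub; apply: h2.
  split; first by move=> a a' Ha aa'; apply: up Ha (mono _ _ aa').
  by move=> a a' Ha Ha'; rewrite hom; apply: mc.
have s1 : forall t, H t -> H1 t by move=> t /e [].
have s2 : forall t, H t -> H2 t by move=> t /e [].
have ok : forall Hi : B -> Prop, is_filter Hi -> (forall t, H t -> Hi t) ->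
    (forall a, Hi (f a) <-> G a) -> forall x, Hi x <-> H x.
  move=> Hi [_ [up mc]] sub eq x; split; last exact: sub.
  apply: (Hmax Hi sub); rewrite /P /=; right; rewrite /good; split.
  - by move=> b Fb; apply: sub; apply: h1.
  - by move=> a Ga; apply/eq.
  - exact: up.
  - exact: mc.
  - by move=> a nGa /eq.
case: (Girr (fun a => H1 (f a)) (fun a => H2 (f a)) (pre _ fH1 s1) (pre _ fH2 s2)).
- by move=> a; rewrite GH; apply: e.
- by move=> h; left; apply: ok.
- by move=> h; right; apply: ok.
Qed.
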